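(* Let $H$ be a bigraph and $S$ a non-trivial strong component of $H^+$. If there is an arc from a vertex of $S$ to a vertex $x\notin S$, then $\{x\}$ is a trivial strong component of $H^+$ and $x$ has out-degree $0$ in $H^+$. If there is an arc from a vertex $x\notin S$ to a vertex of $S$, then $\{x\}$ is a trivial strong component of $H^+$ and $x$ has in-degree $0$ in $H^+$. In particular, $H^+$ has no directed path between two distinct non-trivial strong components.
   Context: A bigraph is a bipartite graph $H$ with fixed bipartition $(B,W)$ (black/white colours). The pair-digraph $H^+$ has vertices all ordered pairs $(u,v)$ of distinct vertices of $H$, and arcs $(u,v)\to(u',v)$ whenever $u,v$ have the same colour, $uu'\in E(H)$, $vu'\notin E(H)$, and $(u,v)\to(u,v')$ whenever $u,v$ have different colours, $vv'\in E(H)$, $uv\notin E(H)$. A strong component is non-trivial if it has more than one vertex, trivial otherwise. *)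

(* Defs.v *)
From mathcomp Require Import all_boot.
Set Implicit Arguments. Unset Strict Implicit. Unset Printing Implicit Defensive.

(* A bigraph: finite vertex type V, colouring col (true = black, false = white),
   symmetric edge relation e whose edges join vertices of different colours. *)
Definition bigraph (V : finType) (col : V -> bool) (e : rel V) : Prop :=
  symmetric e /\ (forall x y, e x y -> col x != col y).

Definition pairv (V : finType) := {p : V * V | p.1 != p.2}.

(* Arcs of the pair-digraph H^+. *)
Definition parc (V : finType) (col : V -> bool) (e : rel V) : rel (pairv V) :=
  fun p q =>
    let: (u, v) := val p in
    let: (u', v') := val q in
    if col u == col v then (v' == v) && e u u' && ~~ e v u'
    else (u' == u) && e v v' && ~~ e u v.

Definition sconn (T : finType) (r : rel T) (x y : T) : bool :=
  connect r x y && connect r y x.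

Definition is_scomp (T : finType) (r : rel T) (S : {set T}) : Prop :=
  exists x, S = [set y | sconn r x y].

Definition nontrivial_scomp (T : finType) (r : rel T) (S : {set T}) : Prop :=
  is_scomp r S /\ 1 < #|S|.

Definition trivial_scomp (T : finType) (r : rel T) (x : T) : Prop :=
  is_scomp r [set x].

Definition outdeg0 (T : finType) (r : rel T) (x : T) : Prop := forall y, ~~ r x y.
Definition indeg0 (T : finType) (r : rel T) (x : T) : Prop := forall y, ~~ r y x.

(* Main.v *)
Require Import Defs.
From mathcomp Require Import all_boot.
Set Implicit Arguments. Unset Strict Implicit. Unset Printing Implicit Defensive.

Lemma out_nb (T : finType) (r : rel T) a b :
  connect r a b -> a != b -> exists z, r a z.
Proof.
move=> /connectP[[|z p] /= Hp ->]; first by rewrite eqxx.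
by case/andP: Hp => H _ _; exists z.
Qed.

Lemma in_nb (T : finType) (r : rel T) a b :
  connect r a b -> a != b -> exists z, r z b.
Proof.
move=> /connectP[p]; case/lastP: p => [|p z] /=; first by move=> _ ->; rewrite eqxx.
rewrite rcons_path last_rcons => /andP[_ H] -> _; by exists (last a p).
Qed.

Lemma scomp_eq (T : finType) (r : rel T) S y :
  is_scomp r S -> y \in S -> S = [set z | sconn r y z].
Proof.
move=> [a ->]; rewrite inE /sconn => /andP[ay ya]; apply/setP => z; rewrite !inE.
apply/andP/andP => [[az za]|[yz zy]]; split.
- exact: connect_trans ya az.
- exact: connect_trans za ay.
- exact: connect_trans ay yz.
- exact: connect_trans zy ya.
Qed.

Lemma nontriv_other (T : finType) (r : rel T) S s :
  nontrivial_scomp r S -> s \in S ->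
  exists t, [/\ t != s, connect r s t & connect r t s].
Proof.
move=> [HS Hc] Hs; move: Hc; rewrite (cardsD1 s) Hs add1n ltnS card_gt0.
case/set0Pn => t; rewrite !inE => /andP[ts tS]; exists t.
move: tS; rewrite (scomp_eq HS Hs) inE /sconn => /andP[st ts']; by split.
Qed.

Lemma trivial_out (T : finType) (r : rel T) x : outdeg0 r x -> trivial_scomp r x.
Proof.
move=> H; exists x; apply/setP => y; rewrite !inE /sconn.
case: (eqVneq y x) => [->|nyx]; first by rewrite connect0.
apply/esym/negbTE/negP => /andP[xy _].
have [z Hz] := out_nb xy (negbT (introF eqP (fun h => (negP nyx) (introT eqP (esym h))))).
by move: (H z); rewrite Hz.
Qed.

Lemma trivial_in (T : finType) (r : rel T) x : indeg0 r x -> trivial_scomp r x.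
Proof.
move=> H; exists x; apply/setP => y; rewrite !inE /sconn.
case: (eqVneq y x) => [->|nyx]; first by rewrite connect0.
apply/esym/negbTE/negP => /andP[_ yx].
have [z Hz] := in_nb yx nyx.
by move: (H z); rewrite Hz.
Qed.
Definition mkp (V : finType) (a b : V) (h : a != b) : pairv V :=
  exist (fun p : V * V => p.1 != p.2) (a, b) h.


Lemma colE (V : finType) (col : V -> bool) e (Hb : bigraph col e) a b :
  e a b -> col b = ~~ col a.
Proof. by move/(Hb.2); case: (col a); case: (col b). Qed.

Lemma esymE (V : finType) (col : V -> bool) e (Hb : bigraph col e) a b :
  e a b = e b a.
Proof. by rewrite Hb.1. Qed.

Lemma neqC (V : finType) (col : V -> bool) (a b : V) : col a != col b -> a != b.
Proof. by apply: contra => /eqP->. Qed.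

Lemma lemA (V : finType) (col : V -> bool) e (Hb : bigraph col e) (y m z : pairv V) :
  col (val m).1 == col (val m).2 -> parc col e y m -> parc col e m z ->
  connect (parc col e) z y.
Proof.
case: y => [[c d] hy]; case: m => [[u v] hm]; case: z => [[a b] hz] /= Hs Hym Hmz.
rewrite /parc /= Hs in Hym Hmz.
case/andP: Hmz => /andP[/eqP eb eua] nva; subst b.
case: ifP Hym => Hcd.
  case/andP => /andP[/eqP vd ecu] _; subst d.
  by move: Hs Hcd; rewrite (colE Hb ecu); case: (col c); case: (col v).
case/andP => /andP[/eqP uc edv] nud; subst c.
have cu : col v = col u by apply/eqP; rewrite eq_sym.
have ca : col a = ~~ col u by rewrite (colE Hb eua).
have cd' : col d = ~~ col u.
  by rewrite (esymE Hb) in edv; rewrite (colE Hb edv) cu.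
have had : a != d.
  by apply: contraNneq nva => ->; rewrite (esymE Hb).
apply: (@connect_trans _ _ (mkp had)); first apply: connect1.
  rewrite /parc /= ca cu; case: (col u) => /=;
  by rewrite eqxx (esymE Hb v d) edv (esymE Hb a v) nva.
apply: connect1; rewrite /parc /= ca cd' eqxx /=.
by rewrite eqxx (esymE Hb a u) eua (esymE Hb d u) nud.
Qed.

Lemma lemB (V : finType) (col : V -> bool) e (Hb : bigraph col e) (m n z : pairv V) :
  col (val m).1 != col (val m).2 -> parc col e m n -> parc col e n z ->
  connect (parc col e) z m.
Proof.
case: m => [[u v] hm]; case: n => [[a b] hn]; case: z => [[c d] hz] /= Hs Hmn Hnz.
rewrite /parc /= (negbTE Hs) in Hmn.
case/andP: Hmn => /andP[/eqP au evb] nuv; subst a.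
have cb : col b = col u.
  by rewrite (colE Hb evb); move: Hs; case: (col u); case: (col v).
move: Hnz; rewrite /parc /= cb eqxx => /andP[/andP[/eqP db euc] nbc]; subst d.
have cc : col c = ~~ col u by rewrite (colE Hb euc).
have cv : col v = ~~ col u by move: Hs; case: (col u); case: (col v).
have hcv : c != v by apply: contraNneq nuv => <-.
apply: (@connect_trans _ _ (mkp hcv)); apply: connect1; rewrite /parc /=.
  rewrite cc cb; case: (col u) => /=;
  by rewrite eqxx (esymE Hb b v) evb (esymE Hb c b) nbc.
by rewrite cc cv eqxx /= eqxx (esymE Hb c u) euc (esymE Hb v u) nuv.
Qed.


Theorem corollary2p7 (V : finType) (col : V -> bool) (e : rel V) :
  bigraph col e ->
  let r := parc col e in
  (forall S : {set pairv V}, nontrivial_scomp r S ->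
     (forall s x, s \in S -> x \notin S -> r s x ->
        trivial_scomp r x /\ outdeg0 r x) /\
     (forall s x, s \in S -> x \notin S -> r x s ->
        trivial_scomp r x /\ indeg0 r x)) /\
  (forall S1 S2 : {set pairv V}, nontrivial_scomp r S1 -> nontrivial_scomp r S2 ->
     S1 != S2 -> forall x y, x \in S1 -> y \in S2 -> ~~ connect r x y).
Proof.
move=> Hb r.
have out_part : forall S, nontrivial_scomp r S -> forall s x, s \in S -> x \notin S ->
    r s x -> outdeg0 r x.
  move=> S HS s x sS xS rsx z; apply/negP => rxz; apply: (negP xS).
  suff xs : connect r x s.
    by rewrite (scomp_eq HS.1 sS) inE /sconn (connect1 rsx) xs.
  case: (boolP (col (val s).1 == col (val s).2)) => Hc.
    have [t [ts st tsc]] := nontriv_other HS sS.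
    have [y rys] := in_nb tsc ts.
    exact: connect_trans (lemA Hb Hc rys rsx) (connect1 rys).
  exact: connect_trans (connect1 rxz) (lemB Hb Hc rsx rxz).
have in_part : forall S, nontrivial_scomp r S -> forall s x, s \in S -> x \notin S ->
    r x s -> indeg0 r x.
  move=> S HS s x sS xS rxs y; apply/negP => ryx; apply: (negP xS).
  suff sx : connect r s x.
    by rewrite (scomp_eq HS.1 sS) inE /sconn (connect1 rxs) sx.
  case: (boolP (col (val x).1 == col (val x).2)) => Hc.
    exact: connect_trans (lemA Hb Hc ryx rxs) (connect1 ryx).
  have [t [ts st tsc]] := nontriv_other HS sS.
  have stn : s != t by rewrite eq_sym.
  have [z rsz] := out_nb st stn.
  exact: connect_trans (connect1 rsz) (lemB Hb Hc rxs rsz).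
split.
  move=> S HS; split=> s x sS xS H.
    have od := out_part S HS s x sS xS H; split => //; exact: trivial_out.
  have idg := in_part S HS s x sS xS H; split => //; exact: trivial_in.
have key : forall S, nontrivial_scomp r S -> forall p x, x \in S -> path r x p ->
    last x p \in S \/ outdeg0 r (last x p).
  move=> S HS; elim=> [|z p IH] x xS /=; first by left.
  case/andP => rxz pz; case: (boolP (z \in S)) => zS; first exact: IH.
  right; have H0 := out_part S HS x z xS zS rxz.
  case: p pz IH => [|w p] //= /andP[rzw _]; by move: (H0 w); rewrite rzw.
move=> S1 S2 H1 H2 neq x y xS yS; apply/negP => /connectP[p pp ly].
have := key S1 H1 p x xS pp; rewrite -ly; case=> [yS1|od].
  by move/eqP: neq; apply; rewrite (scomp_eq H1.1 yS1) (scomp_eq H2.1 yS).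
have [t [ty yt _]] := nontriv_other H2 yS.
have ytn : y != t by rewrite eq_sym.
have [z Hz] := out_nb yt ytn.
by move: (od z); rewrite Hz.
Qed.
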